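(* Let $N\le K$ be positive integers and let $g\in\{1,\dots,N\}$. Consider the caching problem with $N$ files and $K$ users, each with a cache of size $MF$ bits with $M=\frac{N}{gK}$. There exists a placement (with coded prefetching allowed) such that, for every demand vector $\mathbf d\in\{1,\dots,N\}^K$, the delivery rate $$R(\mathbf d)=\frac{K N_e(\mathbf d)\binom{N-1}{g-1}-g\binom{N_e(\mathbf d)+1}{g+1}}{K\binom{N-1}{g-1}}$$ is achievable. Moreover, for non-integer $g\in[1,N]$ (i.e. $M\in[\frac1K,\frac NK]$), the rate given by the lower convex envelope (in $M$) of these values at $g\in\{1,\dots,N\}$ is achievable.
   Context: Caching model: a server stores $N$ files $W_1,\dots,W_N$, each of $F$ bits, and is connected by a shared error-free link to $K$ users $U_1,\dots,U_K$, each with a cache of $MF$ bits. In the placement phase, each user fills its cache with an arbitrary function (coding allowed) of the files, without knowing future demands. Then each user $U_k$ requests one file $W_{\mathbf d(k)}$; $\mathbf d=(\mathbf d(1),\dots,\mathbf d(K))$ is the demand vector and $N_e(\mathbf d)$ the number of distinct entries of $\mathbf d$. In the delivery phase the server, knowing $\mathbf d$, broadcasts a message $X$ of $RF$ bits (a function of $\mathbf d$, the files and the caches) such that every user $U_k$ can reconstruct $W_{\mathbf d(k)}$ from $X$ and its cache. A rate $R$ is achievable for demand $\mathbf d$ if such a message exists (for the fixed placement); the worst-case rate is $R^*=\max_{\mathbf d}R(\mathbf d)$. Memory sharing between two schemes is allowed, so achievable (rate, memory) pairs may be convexly combined. The parameter $g$ is defined by $g=\frac{N}{MK}$. *)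

(* Defs.v *)
From HB Require Import structures.
From mathcomp Require Import all_boot all_order all_algebra.
Set Implicit Arguments. Unset Strict Implicit. Unset Printing Implicit Defensive.
Import Order.TTheory GRing.Theory Num.Theory.

Definition files (F N : nat) := {ffun 'I_N -> F.-tuple bool}.

(* A demand vector d : users 'I_K -> files 'I_N (0-indexed). *)
Definition demand (K N : nat) := {ffun 'I_K -> 'I_N}.

Definition Ne (K N : nat) (d : demand K N) : nat := #|[set d k | k : 'I_K]|.

Local Open Scope ring_scope.

(* Given a placement Z (user k stores Z k W, c bits, an arbitrary function of the
   files), rate R is achievable for demand d if some broadcast message X of r bits,
   r <= R F, lets every user k decode W_{d k} from X and its own cache, for every
   realization W of the files (zero error). *)
Definition rate_achievable (N K F c : nat)
    (Z : 'I_K -> files F N -> c.-tuple bool) (d : demand K N) (R : rat) : Prop :=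
  exists r : nat, (r%:R <= R * F%:R) /\
  exists X : files F N -> r.-tuple bool,
  exists D : 'I_K -> r.-tuple bool -> c.-tuple bool -> F.-tuple bool,
    forall (W : files F N) (k : 'I_K), D k (X W) (Z k W) = W (d k).

(* There is a placement with cache size M (file size F > 0, caches of c <= M F bits)
   under which, for every demand d, the rate rate d is achievable
   (rate d is given as a predicate of admissible values: every v with P d v). *)
Definition placement_achieves (N K : nat) (M : rat)
    (P : demand K N -> rat -> Prop) : Prop :=
  exists F : nat, (0 < F)%N /\
  exists c : nat, c%:R <= M * F%:R /\
  exists Z : 'I_K -> files F N -> c.-tuple bool,
    forall (d : demand K N) (v : rat), P d v -> rate_achievable Z d v.

Definition Rg (N K g n : nat) : rat :=
  (((K * n * 'C(N.-1, g.-1))%:R - (g * 'C(n.+1, g.+1))%:R) / (K * 'C(N.-1, g.-1))%:R).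

Definition Rworst (N K g : nat) : rat :=
  \big[Num.max/0]_(d : demand K N) Rg N K g (Ne d).

Definition convex_comb_at (n : nat) (x y : 'I_n -> rat) (M v : rat) : Prop :=
  exists lam : 'I_n -> rat,
    (forall i, 0 <= lam i) /\ \sum_i lam i = 1 /\
    \sum_i lam i * x i = M /\ \sum_i lam i * y i = v.

Definition lower_convex_envelope (n : nat) (x y : 'I_n -> rat) (M v : rat) : Prop :=
  convex_comb_at x y M v /\ (forall v', convex_comb_at x y M v' -> v <= v').

Arguments placement_achieves : clear implicits.

(* Main.v *)
Require Import Defs.
From HB Require Import structures.
From mathcomp Require Import all_boot all_order all_algebra.
Set Implicit Arguments. Unset Strict Implicit. Unset Printing Implicit Defensive.
Import Order.TTheory GRing.Theory Num.Theory.
From Stdlib Require Import FunctionalExtensionality Classical.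
From mathcomp Require Import zify ring.
Lemma funext {A B : Type} (f g : A -> B) : (forall x, f x = g x) -> f = g.
Proof. exact: functional_extensionality. Qed.

Definition sch (N K F c : nat) (rr : demand K N -> nat) : Prop :=
  exists ZZ : 'I_K -> ('I_N -> 'I_F -> bool) -> 'I_c -> bool,
   forall d : demand K N, exists XX : ('I_N -> 'I_F -> bool) -> 'I_(rr d) -> bool,
   exists DD : 'I_K -> ('I_(rr d) -> bool) -> ('I_c -> bool) -> 'I_F -> bool,
    forall W k i, DD k (XX W) (ZZ k W) i = W (d k) i.
Arguments sch : clear implicits.

Lemma tnth_mk n (T : Type) (f : 'I_n -> T) : tnth [tuple f i | i < n] = f.
Proof. apply: funext => i; exact: tnth_mktuple. Qed.

Lemma to_placement N K F c rr (M : rat) (P : demand K N -> rat -> Prop) :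
  sch N K F c rr -> (0 < F)%N -> (c%:R <= M * F%:R)%R ->
  (forall d v, P d v -> ((rr d)%:R <= v * F%:R)%R) -> placement_achieves N K M P.
Proof.
move=> [ZZ HZ] F0 hc hr; exists F; split => //; exists c; split => //.
exists (fun k Wt => [tuple ZZ k (fun n i => tnth (Wt n) i) i | i < c]).
move=> d v Pv; exists (rr d); split; first exact: hr.
have [XX [DD HD]] := HZ d.
exists (fun Wt => [tuple XX (fun n i => tnth (Wt n) i) i | i < rr d]).
exists (fun k x z => [tuple DD k (tnth x) (tnth z) i | i < F]).
move=> W k; apply: eq_from_tnth => i.
by rewrite tnth_mktuple !tnth_mk HD.
Qed.

Lemma sch_eq N K F c rr F' c' rr' : F = F' -> c = c' -> (forall d, rr d = rr' d) ->
  @sch N K F c rr -> @sch N K F' c' rr'.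
Proof.
move=> <- <- /funext <-; done.
Qed.

Definition lft a b (f : 'I_(a+b) -> bool) : 'I_a -> bool := fun x => f (lshift b x).
Definition rgt a b (f : 'I_(a+b) -> bool) : 'I_b -> bool := fun x => f (rshift a x).
Definition join a b (f : 'I_a -> bool) (g : 'I_b -> bool) : 'I_(a+b) -> bool :=
  fun i => match split i with inl x => f x | inr y => g y end.

Lemma lft_join a b f g : lft (@join a b f g) = f.
Proof. by apply: funext => x; rewrite /lft /join (unsplitK (inl _)). Qed.
Lemma rgt_join a b f g : rgt (@join a b f g) = g.
Proof. by apply: funext => x; rewrite /rgt /join (unsplitK (inr _)). Qed.

Lemma sch_add N K F1 c1 r1 F2 c2 r2 : @sch N K F1 c1 r1 -> @sch N K F2 c2 r2 ->
  @sch N K (F1 + F2) (c1 + c2) (fun d => r1 d + r2 d)%N.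
Proof.
move=> [Z1 H1] [Z2 H2].
exists (fun k W => join (Z1 k (fun n => lft (W n))) (Z2 k (fun n => rgt (W n)))).
move=> d; have [X1 [D1 E1]] := H1 d; have [X2 [D2 E2]] := H2 d.
exists (fun W => join (X1 (fun n => lft (W n))) (X2 (fun n => rgt (W n)))).
exists (fun k x z => join (D1 k (lft x) (lft z)) (D2 k (rgt x) (rgt z))).
move=> W k i; rewrite !lft_join !rgt_join /join -[i in RHS](splitK i).
by case: (split i) => y /=; rewrite ?E1 ?E2.
Qed.

Lemma sch0 N K : @sch N K 0 0 (fun _ => 0%N).
Proof.
exists (fun _ _ _ => false) => d; exists (fun _ _ => false); exists (fun _ _ _ _ => false).
by move=> W k [].
Qed.

Lemma sch_rep N K F c rr a : @sch N K F c rr -> @sch N K (a * F) (a * c) (fun d => a * rr d)%N.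
Proof.
move=> H; elim: a => [|a IH].
  by apply: sch_eq (sch0 N K) => // d; rewrite mul0n.
apply: sch_eq (sch_add H IH); rewrite ?mulSn //.
Qed.

Lemma sch_sum N K n (Fs cs : 'I_n -> nat) (rs : 'I_n -> demand K N -> nat) :
  (forall i, @sch N K (Fs i) (cs i) (rs i)) ->
  @sch N K (\sum_i Fs i) (\sum_i cs i) (fun d => \sum_i rs i d)%N.
Proof.
elim: n Fs cs rs => [|n IH] Fs cs rs H.
  by apply: sch_eq (sch0 N K); rewrite ?big_ord0 // => d; rewrite big_ord0.
apply: sch_eq (sch_add (H ord0) (IH _ _ _ (fun i => H (lift ord0 i))));
  rewrite ?big_ord_recl // => d; by rewrite big_ord_recl.
Qed.


Section Scheme.
Variables (N K g : nat).

Definition CC := 'C(N.-1, g.-1).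
Definition FF := (K * CC)%N.
Definition Sn (n : 'I_N) := [set A : {set 'I_N} | (n \in A) && (#|A| == g)].
Definition PT (n : 'I_N) := ('I_K * {A : {set 'I_N} | A \in Sn n})%type.

Hypothesis card_Sn : forall n, #|Sn n| = CC.

Lemma card_PT n : #|{: PT n}| = FF.
Proof. by rewrite card_prod card_ord card_sig; congr (_ * _)%N; rewrite -(card_Sn n); apply: eq_card. Qed.

Definition toI n (x : PT n) : 'I_FF := cast_ord (card_PT n) (enum_rank x).
Definition ofI n (p : 'I_FF) : PT n := enum_val (cast_ord (esym (card_PT n)) p).
Lemma toIK n : cancel (@ofI n) (@toI n).
Proof. by move=> p; rewrite /toI /ofI enum_valK cast_ordKV. Qed.

Definition bb (W : 'I_N -> 'I_FF -> bool) (n : 'I_N) (j : 'I_K) (A : {set 'I_N}) : bool :=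
  if @insub _ _ {A : {set 'I_N} | A \in Sn n} A is Some s then W n (toI (j, s)) else false.

Lemma bb_ofI W n p : bb W n (ofI n p).1 (val (ofI n p).2) = W n p.
Proof.
rewrite /bb valK; congr (W n _); rewrite -[RHS](toIK n p); by case: (ofI n p).
Qed.

Definition Pc := ('I_N * 'I_K * {set 'I_N})%type.
Definition bP W (p : Pc) := let: (n, j, A) := p in bb W n j A.

Definition gsets := [set A : {set 'I_N} | #|A| == g].
Definition cZ := #|{: {A : {set 'I_N} | A \in gsets}}|.
Definition xsum (A : {set 'I_N}) (f : 'I_N -> bool) := \big[addb/false]_(n in A) f n.

Definition ZZ (k : 'I_K) (W : 'I_N -> 'I_FF -> bool) (i : 'I_cZ) : bool :=
  let A := val (enum_val i) in xsum A (fun n => bb W n k A).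
Definition rdZ (z : 'I_cZ -> bool) (A : {set 'I_N}) : bool :=
  if @insub _ _ {A : {set 'I_N} | A \in gsets} A is Some x then z (enum_rank x) else false.
Lemma rdZ_ok k W A : A \in gsets -> rdZ (ZZ k W) A = xsum A (fun n => bb W n k A).
Proof. by move=> hS; rewrite /rdZ insubT /ZZ enum_rankK. Qed.

Variables (d : demand K N) (k0 : 'I_K).
Definition DD := [set d k | k : 'I_K].
Definition ld (n : 'I_N) := odflt k0 [pick k | d k == n].
Lemma ldP n : n \in DD -> d (ld n) = n.
Proof.
case/imsetP=> k _ ->; rewrite /ld; case: pickP => [k' /eqP //|/(_ k)]; by rewrite eqxx.
Qed.
Definition alpha (T : {set 'I_N}) n := odflt n [pick x in T :\ n].
Lemma alphaP (T : {set 'I_N}) n : (1 < #|T|)%N -> alpha T n \in T :\ n.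
Proof.
move=> hT; rewrite /alpha; case: pickP => [x hx //|h0].
have h1 : #|T :\ n| = 0%N by apply: eq_card0 => x; rewrite h0.
have := cardsD1 n T; rewrite h1 addn0 => E; rewrite E in hT.
by case: (n \in T) hT.
Qed.

Definition valid (p : Pc) := let: (n, j, A) := p in [&& n \in DD, n \in A & #|A| == g].
Definition zc (p : Pc) := let: (n, j, A) := p in ~~ (A \subset DD) || ((d j \in A) && (d j != n)).
Definition repT (T : {set 'I_N}) n : Pc := (n, ld (alpha T n), T :\ alpha T n).
Definition rep (p : Pc) : Pc := let: (n, j, A) := p in
  if A \subset DD then (if d j \in A then (if d j == n then (n, ld n, A) else p)
                        else repT (d j |: A) n) else p.
Definition msgval W p := if zc p then bP W p else bP W p (+) bP W (rep p).
Definition msgP := [set p : Pc | valid p && (zc p || (p != rep p))].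
Definition msgT := [set T : {set 'I_N} | (T \subset DD) && (#|T| == g.+1)].
Definition MI := ({p : Pc | p \in msgP} + {T : {set 'I_N} | T \in msgT})%type.
Definition rr := #|{: MI}|.
Definition XX (W : 'I_N -> 'I_FF -> bool) (i : 'I_rr) : bool :=
  match enum_val i with
  | inl p => msgval W (val p)
  | inr T => xsum (val T) (fun n => bP W (repT (val T) n)) end.
Definition rdP (y : 'I_rr -> bool) (p : Pc) :=
  if @insub _ _ {p : Pc | p \in msgP} p is Some x then y (enum_rank (inl x : MI)) else false.
Definition rdT (y : 'I_rr -> bool) T :=
  if @insub _ _ {T : {set 'I_N} | T \in msgT} T is Some x then y (enum_rank (inr x : MI)) else false.
Lemma rdP_ok W p : p \in msgP -> rdP (XX W) p = msgval W p.
Proof. by move=> h; rewrite /rdP insubT /XX enum_rankK. Qed.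
Lemma rdT_ok W T : T \in msgT -> rdT (XX W) T = xsum T (fun n => bP W (repT T n)).
Proof. by move=> h; rewrite /rdT insubT /XX enum_rankK. Qed.
Definition rdP' y p := if p == rep p then false else rdP y p.
Lemma rdP'_ok W p : valid p -> ~~ zc p -> rdP' (XX W) p = bP W p (+) bP W (rep p).
Proof.
move=> hv hz; rewrite /rdP'; case: eqP => [<-|/eqP h]; first by rewrite addbb.
by rewrite rdP_ok ?inE ?hv ?h ?orbT // /msgval (negbTE hz).
Qed.

Definition repv k y z (p : Pc) : bool := let: (m, j, A) := p in
  if d j \in A then (rdZ z A (+) xsum (A :\ m) (fun n => rdP y (n, k, A))) (+) rdP' y (m, k, A)
  else let T := d j |: A in
       rdT y T (+) (rdZ z (T :\ m) (+) xsum (T :\ m) (fun n => rdP' y (n, k, T :\ m))).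

Definition DEC (k : 'I_K) (y : 'I_rr -> bool) (z : 'I_cZ -> bool) (p : 'I_FF) : bool :=
  let m := d k in let x := ofI m p in let q : Pc := (m, x.1, val x.2) in
  if zc q then rdP y q else rdP' y q (+) repv k y z q.

Hypothesis g1 : (0 < g)%N.

Lemma xsumD1 (A : {set 'I_N}) m f : m \in A -> xsum A f = f m (+) xsum (A :\ m) f.
Proof. move=> h; exact: big_setD1. Qed.
Lemma xsum_split (A : {set 'I_N}) f h : xsum A (fun n => f n (+) h n) = xsum A f (+) xsum A h.
Proof. exact: big_split. Qed.

Lemma xorK3 a s c : a (+) s (+) s (+) (a (+) c) = c.
Proof. by case: a; case: s; case: c. Qed.
Lemma xorK4 a s z : (a (+) s) (+) (z (+) (z (+) s)) = a.
Proof. by case: a; case: s; case: z. Qed.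

Lemma repv_ok W k j A : valid (d k, j, A) -> ~~ zc (d k, j, A) ->
  repv k (XX W) (ZZ k W) (d k, j, A) = bP W (rep (d k, j, A)).
Proof.
set m := d k.
move=> /and3P[mD mA cA]; rewrite /zc negb_or negbK => /andP[AD hj].
rewrite /repv /rep AD.
case: ifP => djA.
  have djm : d j = m by move: hj; rewrite djA /= negbK => /eqP.
  rewrite djm eqxx.
  rewrite rdP'_ok; last first.
    by rewrite /zc AD /= mA eqxx.
    by rewrite /valid mD mA cA.
  rewrite /rep AD -/m mA eqxx rdZ_ok ?inE //.
  rewrite (xsumD1 _ mA).
  have -> : xsum (A :\ m) (fun n => rdP (XX W) (n, k, A)) = xsum (A :\ m) (fun n => bb W n k A).
    apply: eq_bigr => n; rewrite in_setD1 => /andP[nm nA].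
    have hzn : zc (n, k, A) by rewrite /zc; apply/orP; right; rewrite -/m mA eq_sym nm.
    have hm : (n, k, A) \in msgP.
      rewrite inE; apply/andP; split; last by apply/orP; left.
      by rewrite /valid (subsetP AD) // nA cA.
    by rewrite rdP_ok // /msgval hzn.
  by rewrite /= xorK3.
have mT : m \in d j |: A by rewrite setU1r.
have TD : d j |: A \subset DD by rewrite subUset AD andbT sub1set; apply/imsetP; exists j.
have cT : #|d j |: A| = g.+1 by rewrite cardsU1 djA (eqP cA).
have cTm : #|(d j |: A) :\ m| = g by have := cardsD1 m (d j |: A); rewrite mT cT; case.
rewrite rdT_ok ?inE ?TD ?cT ?eqxx // rdZ_ok ?inE ?cTm //.
set T := d j |: A.
have -> : xsum (T :\ m) (fun n => rdP' (XX W) (n, k, T :\ m)) =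
          xsum (T :\ m) (fun n => bb W n k (T :\ m) (+) bP W (repT T n)).
  apply: eq_bigr => n nTm.
  have hsub : T :\ m \subset DD by apply: subset_trans TD; apply: subD1set.
  have mnot : (m \in T :\ m) = false by rewrite setD11.
  rewrite rdP'_ok.
  - by rewrite /rep hsub -/m mnot setD1K.
  - by rewrite /valid /= (subsetP hsub) // nTm cTm eqxx.
  - by rewrite /zc /= hsub -/m mnot.
rewrite xsum_split (xsumD1 _ mT).
by rewrite xorK4.
Qed.

Lemma DEC_aux W k j A : A \in Sn (d k) ->
  (if zc (d k, j, A) then rdP (XX W) (d k, j, A)
   else rdP' (XX W) (d k, j, A) (+) repv k (XX W) (ZZ k W) (d k, j, A)) = bb W (d k) j A.
Proof.
move=> hA.
have mD : d k \in DD by apply/imsetP; exists k.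
move: (hA); rewrite inE => /andP[mA cA].
have hv : valid (d k, j, A) by rewrite /valid /= mD mA cA.
case: ifP => hz.
  have hm : (d k, j, A) \in msgP by rewrite inE hv; apply/orP; left.
  by rewrite rdP_ok // /msgval hz.
have hz' : ~~ zc (d k, j, A) by rewrite hz.
rewrite rdP'_ok // repv_ok //.
by rewrite /= -addbA addbb addbF.
Qed.

Lemma DEC_ok W k p : DEC k (XX W) (ZZ k W) p = W (d k) p.
Proof.
rewrite /DEC -(bb_ofI W (d k) p).
case: (ofI (d k) p) => j [A hA]; exact: DEC_aux.
Qed.

Lemma ofIK n : cancel (@toI n) (@ofI n).
Proof. by move=> x; rewrite /toI /ofI cast_ordK enum_rankK. Qed.

Lemma card_sigS (T : finType) (B : {set T}) : #|{: {x | x \in B}}| = #|B|.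
Proof. by rewrite card_sig; apply: eq_card. Qed.

Lemma disj_card (T : finType) (A B C : {set T}) :
  A :&: B = set0 -> A :|: B \subset C -> (#|A| + #|B| <= #|C|)%N.
Proof. by move=> h0 hs; rewrite -cardsUI h0 cards0 addn0; apply: subset_leq_card. Qed.

Lemma card_pairs (SS : {set {set 'I_N}}) :
  #|[set x : {set 'I_N} * 'I_N | (x.1 \in SS) && (x.2 \in x.1)]| = (\sum_(A in SS) #|A|)%N.
Proof.
rewrite -sum1_card.
rewrite (eq_bigl (fun x : {set 'I_N} * 'I_N => (x.1 \in SS) && (x.2 \in x.1))); last by move=> x; rewrite inE.
rewrite -(pair_big_dep (fun A => A \in SS) (fun A n => n \in A) (fun _ _ => 1%N)).
by apply: eq_bigr => A _; rewrite sum1_card.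
Qed.

Definition SSk k := [set A : {set 'I_N} | (A \subset DD) && (#|A| == k)].
Lemma card_SSk_pairs k : #|[set x : {set 'I_N} * 'I_N | (x.1 \in SSk k) && (x.2 \in x.1)]| = (k * 'C(#|DD|, k))%N.
Proof.
rewrite card_pairs (eq_bigr (fun _ => k)); last by move=> A; rewrite inE => /andP[_ /eqP].
by rewrite sum_nat_const mulnC -cards_draws.
Qed.

Definition validS := [set p : Pc | valid p].
Definition repS := [set p : Pc | valid p && ~~ zc p && (p == rep p)].

Lemma valid_card : (#|validS| <= #|DD| * FF)%N.
Proof.
pose h (x : 'I_N * 'I_FF) : Pc := (x.1, (ofI x.1 x.2).1, val (ofI x.1 x.2).2).
apply: (@leq_trans #|h @: setX DD [set: 'I_FF]|).
  apply: subset_leq_card; apply/subsetP => -[[n j] A]; rewrite inE => /and3P[nD nA cA].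
  have hA : A \in Sn n by rewrite inE nA cA.
  apply/imsetP; exists (n, toI (j, (Sub A hA : {A | A \in Sn n}))); first by rewrite inE nD inE.
  by rewrite /h /= ofIK.
by apply: (leq_trans (leq_imset_card _ _)); rewrite cardsX cardsT card_ord.
Qed.

Lemma rep_card : (g * 'C(#|DD|, g) + g.+1 * 'C(#|DD|, g.+1) <= #|repS|)%N.
Proof.
pose fA (x : {set 'I_N} * 'I_N) : Pc := (x.2, ld x.2, x.1).
pose fB (x : {set 'I_N} * 'I_N) : Pc := repT x.1 x.2.
set cA := [set x : {set 'I_N} * 'I_N | (x.1 \in SSk g) && (x.2 \in x.1)].
set cB := [set x : {set 'I_N} * 'I_N | (x.1 \in SSk g.+1) && (x.2 \in x.1)].
have inA x : x \in cA -> [/\ x.1 \subset DD, #|x.1| = g & x.2 \in x.1].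
  by rewrite !inE => /andP[/andP[-> /eqP ->] ->].
have inB x : x \in cB -> [/\ x.1 \subset DD, #|x.1| = g.+1 & x.2 \in x.1].
  by rewrite !inE => /andP[/andP[-> /eqP ->] ->].
have alB x : x \in cB -> alpha x.1 x.2 \in x.1 :\ x.2.
  by move=> /inB[_ c _]; apply: alphaP; rewrite c ltnS.
rewrite -(card_SSk_pairs g) -(card_SSk_pairs g.+1) -/cA -/cB.
have injA : {in cA &, injective fA} by move=> [A n] [B m] _ _ [-> _ ->].
have injB : {in cB &, injective fB}.
  move=> [A n] [B m] hA hB; rewrite /fB /repT /= => -[enm]; rewrite -enm in hB * => eld eA.
  have := alB _ hA; have := alB _ hB; rewrite /=.
  move: (inB _ hA) (inB _ hB) => /= [AD _ _] [BD _ _].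
  rewrite !in_setD1 => /andP[_ bB] /andP[_ aA].
  have eal : alpha A n = alpha B n.
    by rewrite -[LHS](ldP (subsetP AD _ aA)) -[RHS](ldP (subsetP BD _ bB)) eld.
  by rewrite -(setD1K aA) -(setD1K bB) eA eal.
rewrite -(card_in_imset injA) -(card_in_imset injB).
apply: disj_card.
  apply/setP => p; rewrite !inE; apply/negP => /andP[/imsetP[[A n] hA ->] /imsetP[[B m] hB]].
  rewrite /fA /fB /repT /= => -[enm]; rewrite -enm in hB * => eld _.
  have := alB _ hB; rewrite /= in_setD1 => /andP[an aB].
  move: (inA _ hA) (inB _ hB) => /= [AD _ nA] [BD _ _].
  have := ldP (subsetP AD _ nA); rewrite eld (ldP (subsetP BD _ aB)) => ean.
  by rewrite ean eqxx in an.
apply/subsetP => p; rewrite inE => /orP[] /imsetP[[A n] h ->].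
  move: (inA _ h) => /= [AD cA' nA].
  have dn : d (ld n) = n := ldP (subsetP AD _ nA).
  rewrite inE /fA /valid /zc /rep /= (subsetP AD _ nA) nA cA' eqxx AD dn nA eqxx /=.
  by rewrite eqxx.
move: (inB _ h) (alB _ h) => /= [AD cB' nA]; set a := alpha A n => aA.
move: (aA); rewrite in_setD1 => /andP[an aA'].
have da : d (ld a) = a := ldP (subsetP AD _ aA').
have sub : A :\ a \subset DD by apply: subset_trans AD; apply: subD1set.
have naA : n \in A :\ a by rewrite in_setD1 eq_sym an nA.
have cAa : #|A :\ a| = g by have := cardsD1 a A; rewrite aA' cB'; case.
rewrite inE /fB /repT -/a /valid /zc /rep /= (subsetP AD _ nA) naA cAa eqxx sub da setD11 /=.
by rewrite setD1K // -/a eqxx.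
Qed.

Lemma rr_bound : (rr + g * 'C(#|DD|.+1, g.+1) <= K * #|DD| * CC)%N.
Proof.
have e1 : rr = (#|msgP| + 'C(#|DD|, g.+1))%N by rewrite /rr card_sum !card_sigS cards_draws.
have e2 : (#|msgP| + #|repS| <= #|validS|)%N.
  apply: disj_card.
    apply/setP => p; rewrite !inE; apply/negP => /andP[/andP[_ h1] /andP[/andP[_ h2] h3]].
    by rewrite (negbTE h2) h3 in h1.
  by apply/subsetP => p; rewrite !inE => /orP[] /andP[] //= /andP[].
have e3 := valid_card; have e4 := rep_card.
rewrite e1 binS /FF in e3 *.
move: e2 e3 e4; set x := 'C(#|DD|, g.+1); set y := 'C(#|DD|, g).
rewrite !mulnDr mulSn mulnA [(#|DD| * K)%N]mulnC.
set z := (K * #|DD| * CC)%N; set u := (g * x)%N; set v := (g * y)%N.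
move=> e2 e3 e4.
lia.
Qed.

End Scheme.


Lemma cardSn N g (n : 'I_N) : (0 < g)%N -> #|Sn g n| = CC N g.
Proof.
move=> g1.
have -> : Sn g n = (fun B => n |: B) @: [set B : {set 'I_N} | B \subset [set~ n] & #|B| == g.-1].
  apply/setP => A; rewrite inE; apply/andP/imsetP.
    case=> nA /eqP cA; exists (A :\ n); last by rewrite setD1K.
    rewrite inE; apply/andP; split.
      by apply/subsetP => x; rewrite !inE => /andP[].
    by have := cardsD1 n A; rewrite nA cA; case: g g1 cA => // g' _ _ [->].
  case=> B; rewrite inE => /andP[Bs /eqP cB] ->; split; first exact: setU11.
  have nB : n \notin B by apply/negP => /(subsetP Bs); rewrite !inE eqxx.
  by rewrite cardsU1 nB cB; case: g g1 cB.
rewrite card_in_imset; first by rewrite cards_draws cardsC1 card_ord.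
move=> B1 B2; rewrite !inE => /andP[s1 _] /andP[s2 _] e.
have n1 : n \notin B1 by apply/negP => /(subsetP s1); rewrite !inE eqxx.
have n2 : n \notin B2 by apply/negP => /(subsetP s2); rewrite !inE eqxx.
by rewrite -(setU1K n1) -(setU1K n2) e.
Qed.

Lemma scheme1 N K g (k0 : 'I_K) : (0 < g)%N ->
  sch N K (FF N K g) (cZ N g) (fun d => rr g d k0).
Proof.
move=> g1; pose hS := fun n => @cardSn N g n g1.
exists (ZZ hS) => d; exists (XX hS (d:=d) (k0:=k0)); exists (DEC hS (d:=d) (k0:=k0)).
move=> W k i; exact: DEC_ok.
Qed.

Lemma cZ_eq N g : cZ N g = 'C(N, g).
Proof. by rewrite /cZ card_sigS card_draws card_ord. Qed.

Lemma binN N g : (0 < g)%N -> (N * CC N g = g * 'C(N, g))%N.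
Proof. by case: g => // g _; rewrite /CC /= mul_bin_diag. Qed.

Local Open Scope ring_scope.

Lemma FF_gt0 N K g : (0 < K)%N -> (g <= N)%N -> (0 < g)%N -> (0 < FF N K g)%N.
Proof.
move=> K0 gN g1; rewrite /FF /CC muln_gt0 K0 bin_gt0.
by case: N gN => [|N]; case: g g1 => //.
Qed.

Lemma cZ_mem N K g : (0 < K)%N -> (0 < g)%N ->
  (cZ N g)%:R = (N%:R / (g * K)%:R : rat) * (FF N K g)%:R.
Proof.
move=> K0 g1; rewrite cZ_eq /FF.
have gK : (g * K)%:R != 0 :> rat by rewrite pnatr_eq0 -lt0n muln_gt0 g1 K0.
rewrite mulrAC -natrM mulnCA binN // mulnCA mulnC natrM -natrM.
have -> : (K * 'C(N, g) * g = 'C(N, g) * (g * K))%N by lia.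
by rewrite natrM mulfK.
Qed.

Lemma rate1 N K g (k0 : 'I_K) (d : demand K N) : (0 < K)%N -> (g <= N)%N -> (0 < g)%N ->
  (rr g d k0)%:R <= Rg N K g (Ne d) * (FF N K g)%:R.
Proof.
move=> K0 gN g1.
have F0 : (FF N K g)%:R != 0 :> rat by rewrite pnatr_eq0 -lt0n FF_gt0.
rewrite /Rg /FF -/(CC N g) -/(FF N K g) divfK // lerBrDr -natrD ler_nat.
exact: (rr_bound (fun n => @cardSn N g n g1)).
Qed.

Local Open Scope ring_scope.

Lemma rat_nat (x : rat) : 0 <= x -> exists p q : nat, (0 < q)%N /\ x * q%:R = p%:R.
Proof.
move=> x0; exists `|numq x|%N, `|denq x|%N; split.
  by rewrite absz_gt0 denq_neq0.
have h1 : (`|denq x|%N)%:R = (denq x)%:~R :> rat by case: (denq x) (denq_gt0 x).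
have h2 : (`|numq x|%N)%:R = (numq x)%:~R :> rat.
  by move: (numq_ge0 x); rewrite x0; case: (numq x).
by rewrite h1 h2 numqE.
Qed.

Lemma common_den n (lam : 'I_n -> rat) : (forall i, 0 <= lam i) ->
  exists Q : nat, (0 < Q)%N /\ exists a : 'I_n -> nat, forall i, (a i)%:R = lam i * Q%:R.
Proof.
elim: n lam => [|n IH] lam h0.
  by exists 1%N; split => //; exists (fun _ => 0%N) => -[].
have [Q [Q0 [a ha]]] := IH (fun i => lam (lift ord0 i)) (fun i => h0 _).
have [p [q [q0 hpq]]] := rat_nat (h0 ord0).
exists (Q * q)%N; split; first by rewrite muln_gt0 Q0.
exists (fun i => if unlift ord0 i is Some j then (a j * q)%N else (p * Q)%N) => i.
case: unliftP => [j ->|->].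
  by rewrite natrM ha natrM mulrA.
by rewrite natrM -hpq natrM mulrAC mulrA.
Qed.

Lemma Rworst_ge N K g (d : demand K N) : Rg N K g (Ne d) <= Rworst N K g.
Proof. by rewrite /Rworst (bigD1 d) //= le_max lexx. Qed.

Lemma achieves_mono N K M (P P' : demand K N -> rat -> Prop) :
  (forall d v, P' d v -> P d v) -> placement_achieves N K M P -> placement_achieves N K M P'.
Proof.
move=> h [F [F0 [c [hc [Z HZ]]]]]; exists F; split => //; exists c; split => //.
by exists Z => d v /h; apply: HZ.
Qed.

Section Part2.
Variables (N K : nat) (K0 : (0 < K)%N) (N0 : (0 < N)%N).
Variables (lam : 'I_N -> rat) (lam0 : forall i, 0 <= lam i) (lam1 : \sum_i lam i = 1).
Variables (Q : nat) (Q0 : (0 < Q)%N) (a : 'I_N -> nat) (ha : forall i, (a i)%:R = lam i * Q%:R).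

Let k0 : 'I_K := Ordinal K0.
Definition Fi (i : 'I_N) := FF N K i.+1.
Definition Pt := (\prod_(j < N) Fi j)%N.
Definition Pi (i : 'I_N) := (\prod_(j < N | j != i) Fi j)%N.
Definition cop i := (a i * Pi i)%N.

Lemma Fi_gt0 i : (0 < Fi i)%N.
Proof. by apply: FF_gt0 => //; exact: ltn_ord. Qed.
Lemma PiF i : (Pi i * Fi i)%N = Pt.
Proof. by rewrite /Pt (bigD1 i) //= mulnC. Qed.

Lemma termE i (z : rat) : (cop i)%:R * (z * (Fi i)%:R) = lam i * z * (Q * Pt)%:R.
Proof.
rewrite /cop natrM ha -(PiF i) !natrM; ring.
Qed.

Lemma sumF : (\sum_i cop i * Fi i)%N = (Q * Pt)%N.
Proof.
apply/eqP; rewrite -(eqr_nat rat) natr_sum.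
rewrite (eq_bigr (fun i => lam i * 1 * (Q * Pt)%:R)); last first.
  by move=> i _; rewrite natrM -termE mul1r.
by rewrite -mulr_suml (eq_bigr lam) ?lam1 ?mul1r // => i _; rewrite mulr1.
Qed.

Lemma part2_core (M v0 : rat) :
  \sum_i lam i * (N%:R / (i.+1 * K)%:R : rat) = M ->
  \sum_i lam i * Rworst N K i.+1 = v0 ->
  placement_achieves N K M (fun _ v => v0 <= v).
Proof.
move=> hM hv.
have S := sch_sum (fun i => sch_rep (cop i) (@scheme1 N K i.+1 k0 (ltn0Sn i))).
apply: (to_placement S).
- by rewrite sumF muln_gt0 Q0 prodn_gt0 // => i; apply: Fi_gt0.
- rewrite sumF natr_sum le_eqVlt; apply/orP; left; apply/eqP.
  rewrite -hM mulr_suml; apply: eq_bigr => i _.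
  by rewrite natrM (@cZ_mem N K) // -/(Fi i) termE.
- move=> d v hv0; rewrite sumF natr_sum.
  apply: (@le_trans _ _ (v0 * (Q * Pt)%:R)); last first.
    by rewrite ler_wpM2r // ler0n.
  rewrite -hv mulr_suml; apply: ler_sum => i _.
  rewrite -termE natrM ler_wpM2l ?ler0n //.
  apply: (le_trans (rate1 k0 d K0 (ltn_ord i) (ltn0Sn i))).
  by rewrite ler_wpM2r ?ler0n // Rworst_ge.
Qed.
End Part2.

Unset Implicit Arguments.
Local Open Scope ring_scope.

Theorem theorem1 (N K : nat) (hN : (0 < N)%N) (hNK : (N <= K)%N) :
  (forall g : nat, (1 <= g <= N)%N ->
     placement_achieves N K (N%:R / (g * K)%:R : rat)
       (fun d v => v = Rg N K g (Ne d)))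
  /\
  (forall M : rat, 1 / K%:R <= M <= N%:R / K%:R ->
     (forall g : nat, (1 <= g <= N)%N -> M != N%:R / (g * K)%:R) ->
     placement_achieves N K M
       (fun _ v => lower_convex_envelope
                     (fun i : 'I_N => (N%:R / (i.+1 * K)%:R : rat))
                     (fun i : 'I_N => Rworst N K i.+1) M v)).
Proof.
have K0 : (0 < K)%N by apply: leq_trans hNK.
pose k0 : 'I_K := Ordinal K0.
split.
  move=> g /andP[g1 gN].
  apply: (to_placement (@scheme1 N K g k0 g1)).
  - exact: FF_gt0.
  - by rewrite (@cZ_mem N K g).
  - by move=> d v ->; exact: rate1.
move=> M /andP[M1 _] _.
case: (classic (exists v0, lower_convex_envelope
                     (fun i : 'I_N => (N%:R / (i.+1 * K)%:R : rat))
                     (fun i : 'I_N => Rworst N K i.+1) M v0)).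
  move=> [v0 [[lam [l0 [l1 [lx ly]]]] min0]].
  have [Q [Q0 [a ha]]] := common_den l0.
  apply: achieves_mono (part2_core K0 l1 Q0 ha lx ly).
  by move=> d v [hv _]; exact: min0.
move=> hno.
exists 1%N; split => //; exists 0%N; split.
  rewrite mulr1; apply: le_trans M1; rewrite mul1r invr_ge0 ler0n //.
exists (fun _ _ => [tuple]) => d v hv.
by case: hno; exists v.
Qed.
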